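(* Let $p$ be a prime with $p\equiv 1\pmod 3$, and let $$D_p(1,1)=\det\left[(i^2+ij+j^2)^{p-2}\right]_{1\le i,j\le p-1}.$$ Then the Legendre symbol satisfies $$\left(\frac{D_p(1,1)}{p}\right)=\begin{cases}0 & \text{if } p\equiv 7\pmod 9,\\ 1 & \text{otherwise.}\end{cases}$$
   Context: $\left(\frac{\cdot}{p}\right)$ denotes the Legendre symbol modulo $p$. The determinant is of the $(p-1)\times(p-1)$ integer matrix whose $(i,j)$ entry is $(i^2+ij+j^2)^{p-2}$. *)

(* Defs.v *)
From mathcomp Require Import all_boot all_order all_algebra.
Set Implicit Arguments. Unset Strict Implicit. Unset Printing Implicit Defensive.
Import Order.TTheory GRing.Theory Num.Theory.
Local Open Scope ring_scope.

Definition legendre (a : int) (p : nat) : int :=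
  if (p%:Z %| a)%Z then 0
  else if [exists x : 'I_p, ((x%:Z) ^+ 2 == a %[mod p%:Z])%Z] then 1 else -1.

Definition Dp11 (p : nat) : int :=
  \det (\matrix_(i < p.-1, j < p.-1)
          ((((i.+1) ^ 2 + i.+1 * j.+1 + (j.+1) ^ 2)%N)%:Z ^+ (p - 2)%N)).

(* Main.v *)
Require Import Defs.
From mathcomp Require Import all_boot all_order all_algebra.
From mathcomp Require Import all_field ring zify.
Set Implicit Arguments. Unset Strict Implicit. Unset Printing Implicit Defensive.
Import GRing.Theory.
Local Open Scope ring_scope.

Lemma tele (R : comPzRingType) (A B u : R) (n : nat) :
  (1 - u) * \sum_(j < n) u ^+ j * (A + j%:R * B) =
  A - u ^+ n * (A + n%:R * B) + B * \sum_(j < n) u ^+ j.+1.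
Proof.
elim: n => [|n IH]; first by rewrite !big_ord0 expr0; ring.
rewrite !big_ord_recr /= mulrDr IH !exprS -addn1 natrD; ring.
Qed.

Lemma sum_lin (R : comPzRingType) (n : nat) :
  2 * \sum_(j < n) (2 + 3 * j%:R) = n%:R * (3 * n%:R + 1) :> R.
Proof.
elim: n => [|n IH]; first by rewrite big_ord0; ring.
rewrite big_ord_recr /= mulrDr IH -addn1 natrD; ring.
Qed.

Lemma sum3 (R : nmodType) (h : nat -> R) (n : nat) :
  \sum_(f < 3 * n) h f = \sum_(j < n) (h (3 * j)%N + h (3 * j)%N.+1 + h (3 * j)%N.+2).
Proof.
elim: n => [|n IH]; first by rewrite muln0 !big_ord0.
rewrite [in RHS]big_ord_recr /= -IH mulnS.
rewrite -!(big_mkord xpredT).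
rewrite (@big_cat_nat _ _ _ (3 * n)) //=; last by lia.
congr (_ + _).
rewrite !big_nat_recl //= ?big_geq //; last by lia.
by rewrite addr0 !addrA.
Qed.

Lemma prod3 (R : comPzRingType) (h : nat -> R) (n : nat) :
  \prod_(f < 3 * n) h f = \prod_(j < n) (h (3 * j)%N * h (3 * j)%N.+1 * h (3 * j)%N.+2).
Proof.
elim: n => [|n IH]; first by rewrite muln0 !big_ord0.
rewrite [in RHS]big_ord_recr /= -IH mulnS.
rewrite -!(big_mkord xpredT).
rewrite (@big_cat_nat _ _ _ (3 * n)) //=; last by lia.
congr (_ * _).
rewrite !big_nat_recl //= ?big_geq //; last by lia.
by rewrite mulr1 !mulrA.
Qed.

Definition dd (R : pzRingType) (q f : nat) : R :=
  let j := (f %/ 3)%N in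
  match (f %% 3)%N with
  | 0 => (3 * j + q + 2)%N%:R
  | 1 => - (3 * j + 2 * q + 3)%N%:R
  | _ => q%:R end.


Lemma dd0 (R : pzRingType) q j : dd R q (3 * j)%N = (3 * j + q + 2)%N%:R.
Proof.
rewrite /dd; have -> : ((3 * j) %% 3 = 0)%N by lia.
by have -> : ((3 * j) %/ 3 = j)%N by lia.
Qed.
Lemma dd1 (R : pzRingType) q j : dd R q (3 * j)%N.+1 = - (3 * j + 2 * q + 3)%N%:R.
Proof.
rewrite /dd; have -> : ((3 * j).+1 %% 3 = 1)%N by lia.
by have -> : ((3 * j).+1 %/ 3 = j)%N by lia.
Qed.
Lemma dd2 (R : pzRingType) q j : dd R q (3 * j)%N.+2 = q%:R.
Proof. by rewrite /dd; have -> : ((3 * j).+2 %% 3 = 2)%N by lia. Qed.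

Section Fp.
Variable p : nat.
Hypothesis pr : prime p.
Hypothesis p3 : (p %% 3 = 1)%N.
Local Notation F := 'F_p.
Local Notation q := (p %/ 3)%N.

Lemma pq : p = (3 * q + 1)%N.
Proof. by rewrite {1}(divn_eq p 3) p3 mulnC. Qed.

Lemma pn1 : p.-1 = (3 * q)%N.
Proof. by rewrite {1}pq addn1. Qed.

Lemma p_gt1 : (1 < p)%N. Proof. exact: prime_gt1. Qed.

Lemma q_even : ~~ odd q.
Proof.
have [p2|op] := even_prime pr; first by move: p3; rewrite p2.
move: op; rewrite pq; lia.
Qed.

Lemma q_gt0 : (0 < q)%N.
Proof. have := p_gt1; rewrite pq; lia. Qed.

Lemma natF0 k : ((k%:R : F) == 0) = (p %| k)%N.
Proof. by rewrite (dvdn_pcharf (pchar_Fp pr)). Qed.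

Lemma pF : (p%:R : F) = 0.
Proof. exact: pchar_Fp_0. Qed.

Lemma q3F : 3 * (q%:R : F) = -1.
Proof.
have h : ((3 * q + 1)%N%:R : F) = 0 by rewrite -pq pF.
by apply/(addIr 1); rewrite addNr -h natrD natrM.
Qed.

Lemma three_neq0 : (3 : F) != 0.
Proof.
rewrite -[3]/(3%:R) natF0; apply/negP => /(dvdn_leq (isT : (0 < 3)%N)) le3.
have := p3; have := p_gt1; lia.
Qed.

Lemma fermat (x : F) : x != 0 -> x ^+ p.-1 = 1.
Proof.
move=> nz; apply: (mulfI nz); rewrite -exprS prednK ?prime_gt0 // mulr1.
by have := expf_card x; rewrite card_Fp.
Qed.

Definition Gs (s : F) := \sum_(f < p.-1) dd F q f * s ^+ f.

Definition As (s : F) : F := (q + 2)%N%:R - (2 * q + 3)%N%:R * s + q%:R * s ^+ 2.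

Lemma G_form s : Gs s =
  \sum_(j < q) (s ^+ 3) ^+ j * (As s + j%:R * (3 * (1 - s))).
Proof.
rewrite /Gs pn1 (sum3 (fun f => dd F q f * s ^+ f)); apply: eq_bigr => j _.
rewrite dd0 dd1 dd2 -exprM !exprSr /As !natrD; ring.
Qed.

Lemma two_neq0 : (2 : F) != 0.
Proof.
rewrite -[2]/(2%:R) natF0; apply/negP => /(dvdn_leq (isT : (0 < 2)%N)) le2.
have := q_gt0; rewrite -(leq_pmul2l (isT : (0 < 3)%N)) => h.
move: le2; rewrite {1}pq; lia.
Qed.

Lemma Gval s : s != 0 -> (1 + s + s ^+ 2) ^+ (p - 2) = Gs s.
Proof.
move=> s0.
have u1 : (s ^+ 3) ^+ q = 1 by rewrite -exprM -pn1 fermat.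
have pm2 : (p - 2).+1 = p.-1 by have := p_gt1; lia.
have hq := q3F.
have [T0|Tn0] := eqVneq (1 + s + s ^+ 2) 0.
  rewrite T0 expr0n /=.
  have -> : (p - 2 == 0)%N = false.
    apply/negbTE; have := q_gt0; rewrite pq; lia.
  have s3 : s ^+ 3 = 1.
    have e : (1 - s) * (1 + s + s ^+ 2) = 1 - s ^+ 3 by ring.
    by move: e; rewrite T0 mulr0 => /eqP; rewrite eq_sym subr_eq0 => /eqP <-.
  rewrite G_form s3.
  have e : forall j : nat, As s + j%:R * (3 * (1 - s)) =
     (1 - s) * (2 + 3 * j%:R) + ((3 * q%:R + 1) * (- s) + q%:R * (1 + s + s ^+ 2)).
    by move=> j; rewrite /As !natrD; ring.
  under eq_bigr => j _ do rewrite expr1n mul1r e T0 hq addNr !mul0r mulr0 !addr0.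
  rewrite -mulr_sumr.
  have := sum_lin F q; rewrite hq addNr mulr0 => /eqP; rewrite mulf_eq0.
  by rewrite (negbTE two_neq0) /= => /eqP ->; rewrite mulr0.
apply: (mulfI Tn0); rewrite -exprS pm2 fermat //.
have [->|s1] := eqVneq s 1.
  rewrite G_form.
  have e : As 1 = -1 by rewrite /As !natrD; ring.
  under eq_bigr => j _ do rewrite !expr1n mul1r e subrr !mulr0 addr0.
  rewrite sumr_const card_ord mulNrn.
  have h : (1 + 1 + 1 ^+ 2) * (- q%:R) = -(3 * q%:R) :> F by ring.
  by rewrite h hq opprK.
have hT : 1 - s ^+ 3 = (1 - s) * (1 + s + s ^+ 2) by ring.
have s1' : 1 - s != 0 by rewrite subr_eq0 eq_sym.
have u1n : s ^+ 3 - 1 != 0.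
  by rewrite -opprB oppr_eq0 hT mulf_neq0.
have sum0 : \sum_(j < q) (s ^+ 3) ^+ j = 0.
  have := subrX1 (s ^+ 3) q; rewrite u1 subrr => /esym/eqP.
  by rewrite mulf_eq0 (negbTE u1n) /= => /eqP.
have := tele (As s) (3 * (1 - s)) (s ^+ 3) q.
rewrite -G_form u1 mul1r.
under [in X in _ = X -> _]eq_bigr => j _ do rewrite exprS.
rewrite -mulr_sumr sum0 mulr0 mulr0 addr0 hT.
have -> : As s - (As s + q%:R * (3 * (1 - s))) = (1 - s) * (- (3 * q%:R)) by ring.
rewrite hq opprK mulr1 -mulrA => e.
by apply: (mulfI s1'); rewrite e mulr1.
Qed.
End Fp.

Section Mat.
Variable p : nat.
Hypothesis pr : prime p.
Hypothesis p3 : (p %% 3 = 1)%N.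
Local Notation F := 'F_p.
Local Notation q := (p %/ 3)%N.
Local Notation n := p.-1.

Definition xi (i : 'I_n) : F := (i.+1)%:R.

Lemma xi_neq0 i : xi i != 0.
Proof.
rewrite /xi (natF0 pr); apply/negP => /(dvdn_leq (ltn0Sn _)).
have := ltn_ord i; have := p_gt1 pr; lia.
Qed.

Lemma xi_inj i j : xi i = xi j -> i = j.
Proof.
wlog lij : i j / (i <= j)%N.
  move=> H e; case: (leqP i j) => [|/ltnW] h; first exact: H.
  by apply/esym/H.
move=> /eqP; rewrite eq_sym -subr_eq0 /xi -natrB // (natF0 pr).
case: (posnP (j.+1 - i.+1)) => [h _|h /(dvdn_leq h)].
  by apply/val_inj => /=; lia.
have := ltn_ord j; have := p_gt1 pr; lia.
Qed.

Lemma xi2 (x : F) : x != 0 -> (x ^+ 2) ^+ (p - 2) = x^-1 ^+ 2.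
Proof.
move=> x0; have x20 : x ^+ 2 != 0 by rewrite expf_neq0.
apply: (mulIf x20); rewrite -exprSr.
have -> : (p - 2).+1 = p.-1 by have := p_gt1 pr; lia.
by rewrite (fermat pr) // exprVn mulVf.
Qed.

Definition Mmat : 'M[F]_n :=
  \matrix_(i, j) (xi i ^+ 2 + xi i * xi j + xi j ^+ 2) ^+ (p - 2).
Definition Umat : 'M[F]_n := \matrix_(f, i) (xi i)^-1 ^+ (f + 2).
Definition Wmat : 'M[F]_n := \matrix_(f, j) xi j ^+ f.
Definition drow : 'rV[F]_n := \row_(f < n) dd F q f.

Lemma Mfact : Mmat = (Umat^T *m diag_mx drow) *m Wmat.
Proof.
apply/matrixP => i j; rewrite mul_mx_diag !mxE.
set x := xi i; set y := xi j; have x0 : x != 0 := xi_neq0 i.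
set s := y * x^-1.
have s0 : s != 0 by rewrite mulf_neq0 ?invr_eq0 // xi_neq0.
have e1 : x ^+ 2 + x * y + y ^+ 2 = x ^+ 2 * (1 + s + s ^+ 2).
  by rewrite /s; clearbody x y; move: x0; clear; move=> x0; field.
rewrite e1 exprMn xi2 // (Gval pr p3 s0) /Gs mulr_sumr.
apply: eq_bigr => f _; rewrite !mxE /s exprMn exprD -/x -/y; ring.
Qed.

Lemma geo (r : F) : r != 0 -> \sum_(f < n) r ^+ f = if r == 1 then -1 else 0.
Proof.
move=> r0; have [->|r1] := eqVneq r 1.
  under eq_bigr => f _ do rewrite expr1n.
  rewrite sumr_const card_ord; apply: (addIr 1); rewrite addNr.
  by rewrite -mulrSr prednK ?prime_gt0 // (pF pr).
have := subrX1 r n; rewrite (fermat pr) // subrr => /esym/eqP.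
by rewrite mulf_eq0 subr_eq0 (negbTE r1) /= => /eqP.
Qed.

Lemma UW : Umat^T *m Wmat = diag_mx (\row_i (- (xi i)^-1 ^+ 2)).
Proof.
apply/matrixP => i j; rewrite !mxE.
have x0 := xi_neq0 i.
under eq_bigr => f _ do rewrite !mxE exprD mulrAC -exprMn [_ * xi j]mulrC.
rewrite -mulr_suml geo; last by rewrite mulf_neq0 ?invr_eq0 // xi_neq0.
have -> : (xi j * (xi i)^-1 == 1) = (i == j).
  apply/eqP/eqP => [e|->]; last by rewrite mulfV // xi_neq0.
  apply/xi_inj/esym; apply: (mulIf (invr_neq0 x0)); by rewrite mulfV // -e mulfVK.
case: eqP => _; rewrite ?mulr1n ?mulr0n ?mul0r //.
by rewrite exprVn mulNr mul1r.
Qed.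

Definition aa (j : nat) : F := (3 * j + q + 2)%N%:R.
Definition Xv : F :=
  (\prod_(i < n) (xi i)^-1) * (\prod_(j < q) aa j) * (q%:R ^+ q./2).

Lemma prod_dd : \prod_(f < n) dd F q f = (\prod_(j < q) aa j) ^+ 2 * q%:R ^+ q.
Proof.
rewrite pn1 // (prod3 (fun f => dd F q f)).
under eq_bigr => j _ do rewrite dd0 dd1 dd2.
rewrite !big_split /= prodr_const card_ord expr2; congr (_ * _ * _).
rewrite -(big_mkord (fun _ => true) (fun j => aa j)) -(big_mkord (fun _ => true) (fun i => 1 *- (3 * i + 2 * q + 3)%N)) big_nat_rev /=.
apply: eq_big_nat => j /andP[_ jq].
apply/eqP; rewrite /aa eq_sym -addr_eq0 -natrD (natF0 pr).
have -> : (3 * j + q + 2 + (3 * (0 + q - j.+1) + 2 * q + 3))%N = (2 * p)%N.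
  by have := pq p3; lia.
exact: dvdn_mull.
Qed.

Lemma detM : \det Mmat = Xv ^+ 2.
Proof.
rewrite Mfact !det_mulmx det_tr det_diag mulrAC.
have -> : \det Umat * \det Wmat = \prod_(i < n) (- (xi i)^-1 ^+ 2).
  by rewrite -det_tr -det_mulmx UW det_diag; apply: eq_bigr => i _; rewrite mxE.
rewrite (eq_bigr (fun i : 'I_n => -1 * (xi i)^-1 ^+ 2)) => [|i _]; last by rewrite mulN1r.
rewrite big_split /= prodr_const card_ord prodrXl -signr_odd.
have -> : odd n = false by rewrite pn1 // oddM /= (negbTE (q_even pr p3)).
rewrite mul1r.
have -> : \prod_(i < n) drow 0 i = \prod_(f < n) dd F q f by apply: eq_bigr => f _; rewrite mxE.
rewrite prod_dd /Xv.
have hq2 : (q./2 * 2)%N = q.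
  by have := odd_double_half q; rewrite (negbTE (q_even pr p3)) add0n -muln2.
have e : q%:R ^+ q = (q%:R ^+ q./2) ^+ 2 :> F by rewrite -exprM hq2.
rewrite e !exprMn; ring.
Qed.
End Mat.

Section Fin.
Variable p : nat.
Hypothesis pr : prime p.
Hypothesis p3 : (p %% 3 = 1)%N.
Local Notation F := 'F_p.
Local Notation q := (p %/ 3)%N.
Local Notation n := p.-1.

Lemma Dp_F : ((Dp11 p)%:~R : F) = \det (Mmat p).
Proof.
rewrite /Dp11 -det_map_mx; congr (\det _); apply/matrixP => i j.
rewrite !mxE rmorphXn /=; congr (_ ^+ _).
have -> : forall k : nat, ((k%:Z)%:~R : F) = k%:R by [].
by rewrite /xi !natrD !natrM ?natrX ?expr2.
Qed.

Lemma intF0 (z : int) : ((z%:~R : F) == 0) = (p%:Z %| z)%Z.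
Proof.
case: z => k; first by rewrite dvdzE /= -(natF0 pr).
by rewrite NegzE mulrNz oppr_eq0 dvdzE abszN /= -(natF0 pr).
Qed.

Lemma aa_zero : (exists j : 'I_q, (p %| 3 * j + q + 2)%N) <-> (p %% 9 == 7)%N.
Proof.
have hp := pq p3; have p1 := p_gt1 pr.
split.
  move=> [j /dvdnP [k hk]]; have jq := ltn_ord j.
  have k1 : k = 1%N by nia.
  move: hk; rewrite k1 mul1n => hk; lia.
move=> h9.
have jq : ((2 * q - 1) %/ 3 < q)%N by lia.
exists (Ordinal jq) => /=.
have -> : (3 * ((2 * q - 1) %/ 3) + q + 2)%N = p by lia.
exact: dvdnn.
Qed.

End Fin.

Theorem final (p : nat) (hp : prime p) (hp3 : (p %% 3 = 1)%N) :
  legendre (Dp11 p) p = (if (p %% 9 == 7)%N then 0%R else 1%R).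
Proof.
have hD : ((Dp11 p)%:~R : 'F_p) = Xv p ^+ 2 by rewrite Dp_F // detM.
have Xz : (Xv p == 0) = (p %% 9 == 7)%N.
  have i0 : \prod_(i < p.-1) (xi i)^-1 != 0.
    by apply/prodf_neq0 => i _; rewrite invr_eq0 xi_neq0.
  have q0 : (p %/ 3)%:R ^+ (p %/ 3)./2 != 0 :> 'F_p.
    rewrite expf_neq0 // (natF0 hp); apply/negP => /(dvdn_leq (q_gt0 hp hp3)).
    have := pq hp3; have := p_gt1 hp; lia.
  rewrite /Xv !mulf_eq0 (negbTE i0) (negbTE q0) orbF /=.
  apply/idP/idP => [/prodf_eq0 [j _]|/(aa_zero hp hp3) [j hj]].
    by rewrite /aa (natF0 hp) => hj; apply/(aa_zero hp hp3); exists j.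
  by apply/prodf_eq0; exists j => //; rewrite /aa (natF0 hp).
rewrite /legendre -(intF0 hp) hD expf_eq0 /= Xz.
case: ifP => h9 //.
case: ifP => // /negbT/negP nex; exfalso; apply: nex; apply/existsP.
set X := Xv p.
have Xp : (val X < p)%N by rewrite -[X in (_ < X)%N](card_Fp hp) card_ord ltn_ord.
exists (Ordinal Xp).
rewrite eqz_mod_dvd -(intF0 hp) rmorphB rmorphXn /= hD.
have -> : ((Posz (val X))%:~R : 'F_p) = X by rewrite -[RHS](natr_Zp X).
by rewrite subrr.
Qed.

Theorem theorem1p1 (p : nat) (hp : prime p) (hp3 : (p %% 3 = 1)%N) :
  legendre (Dp11 p) p = (if (p %% 9 == 7)%N then 0%R else 1%R).
Proof. exact: final. Qed.
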